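(* Let $(S,<_S)$ be a well-founded order which does not embed $R_{2,2}$. The following are equivalent: (1) $(S,<_S)$ does not embed $S_{\omega,2}$; (2) $(D(S),\subsetneq)$ is well-founded; (3) $(\mathrm{CU}(S),\subsetneq)$ is well-founded.
   Context: An order $(S,<_S)$ is a set with a strict partial order (antisymmetric, transitive). An embedding of $(S,<_S)$ into $(R,<_R)$ is an injection $\pi$ with $x<_S y\iff\pi(x)<_R\pi(y)$. $R_{2,2}$ is the order on $\{x_0,x_1,y_0,y_1\}$ whose only relations are $x_0<y_0$, $x_1<y_1$. $S_{\omega,2}$ is the order on $\{x_n\}_{n<\omega}\uplus\{y_n\}_{n<\omega}$ whose relations are exactly $x_m<y_n$ for $m\geq n$. For $x\in S$: $d(x)=\{z\mid z<_S x\}$, $u(x)=\{z\mid x<_S z\}$, $\mathrm{cu}(x)=S\setminus u(x)$; $D(S)=\{d(x)\mid x\in S\}$ and $\mathrm{CU}(S)=\{\mathrm{cu}(x)\mid x\in S\}$. *)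

(* Defs.v *)
From Stdlib Require Import Arith.

Definition strict_order {S : Type} (lt : S -> S -> Prop) : Prop :=
  (forall x, ~ lt x x) /\ (forall x y z, lt x y -> lt y z -> lt x z).

Definition embeds {S R : Type} (ltS : S -> S -> Prop) (ltR : R -> R -> Prop) : Prop :=
  exists pi : S -> R,
    (forall x y, pi x = pi y -> x = y) /\
    (forall x y, ltS x y <-> ltR (pi x) (pi y)).

Inductive R22 : Type := x0 | x1 | y0 | y1.
Definition R22_lt (a b : R22) : Prop :=
  (a = x0 /\ b = y0) \/ (a = x1 /\ b = y1).

(* S_{omega,2} on {x_n} + {y_n}: x_n = inl n, y_n = inr n;
   relations exactly x_m < y_n for m >= n. *)
Definition Somega2_lt (a b : nat + nat) : Prop :=
  match a, b with
  | inl m, inr n => n <= m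
  | _, _ => False
  end.

Section Sets.
Context {S : Type} (lt : S -> S -> Prop).
Definition dset (x : S) : S -> Prop := fun z => lt z x.
Definition uset (x : S) : S -> Prop := fun z => lt x z.
Definition cuset (x : S) : S -> Prop := fun z => ~ lt x z.
End Sets.

Definition DS {S : Type} (lt : S -> S -> Prop) : Type :=
  { A : S -> Prop | exists x, A = dset lt x }.
Definition CUS {S : Type} (lt : S -> S -> Prop) : Type :=
  { A : S -> Prop | exists x, A = cuset lt x }.

Definition subset {S : Type} (A B : S -> Prop) : Prop := forall z, A z -> B z.
Definition psubset {S : Type} (A B : S -> Prop) : Prop := subset A B /\ ~ subset B A.

Definition DS_lt {S : Type} (lt : S -> S -> Prop) (A B : DS lt) : Prop :=
  psubset (proj1_sig A) (proj1_sig B).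
Definition CUS_lt {S : Type} (lt : S -> S -> Prop) (A B : CUS lt) : Prop :=
  psubset (proj1_sig A) (proj1_sig B).

(* Main.v *)
Require Import Defs.
From Stdlib Require Import Arith Lia Classical IndefiniteDescription.

Lemma chain_not_wf {A} (R : A -> A -> Prop) (f : nat -> A) :
  (forall n, R (f (S n)) (f n)) -> ~ well_founded R.
Proof.
  intros Hf W.
  assert (H : forall x, Acc R x -> forall n, x <> f n).
  { intros x Ha; induction Ha as [x _ IH]; intros n Hx.
    apply (IH (f (S n))) with (n := S n); [rewrite Hx; apply Hf | reflexivity]. }
  exact (H (f 0) (W _) 0 eq_refl).
Qed.

Lemma not_wf_chain {A} (R : A -> A -> Prop) :
  ~ well_founded R -> exists f : nat -> A, forall n, R (f (S n)) (f n).
Proof.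
  intros HW.
  destruct (not_all_ex_not _ _ HW) as [x0 H0].
  assert (step : forall x : {x | ~ Acc R x},
             {y : {y | ~ Acc R y} | R (proj1_sig y) (proj1_sig x)}).
  { intros [x Hx]. apply constructive_indefinite_description.
    apply NNPP; intro Hn. apply Hx. constructor. intros y Hy.
    apply NNPP; intro Hy'. apply Hn. exists (exist _ y Hy'). exact Hy. }
  pose (F := fix F (n : nat) : {x | ~ Acc R x} :=
         match n with O => exist _ x0 H0 | S n => proj1_sig (step (F n)) end).
  exists (fun n => proj1_sig (F n)). intro n.
  exact (proj2_sig (step (F n))).
Qed.

Lemma wf_min {T} (lt : T -> T -> Prop) (P : T -> Prop) :
  well_founded lt -> (exists x, P x) -> exists x, P x /\ forall y, P y -> ~ lt y x.
Proof.
  intros W [x Px]. apply NNPP; intro Hn.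
  assert (H : forall z, Acc lt z -> ~ P z).
  { intros z Ha; induction Ha as [z _ IH]; intro Pz.
    apply Hn. exists z; split; [exact Pz|].
    intros y Py Hy. exact (IH y Hy Py). }
  exact (H x (W x) Px).
Qed.

Lemma refine {T} (lt : T -> T -> Prop) (f : nat -> T) :
  well_founded lt ->
  exists g : nat -> nat, (forall i j, i < j -> g i < g j) /\
    (forall i j, i < j -> ~ lt (f (g j)) (f (g i))).
Proof.
  intros W.
  assert (next : forall k, {i | k <= i /\ forall j, k <= j -> ~ lt (f j) (f i)}).
  { intro k. apply constructive_indefinite_description.
    destruct (wf_min lt (fun s => exists i, k <= i /\ f i = s) W) as [s [[i [Hki Hi]] Hmin]].
    - exists (f k), k; split; [lia|reflexivity].
    - exists i; split; [exact Hki|]. intros j Hj. rewrite Hi. apply Hmin.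
      exists j; split; [exact Hj| reflexivity]. }
  pose (h := fix h (n : nat) : nat :=
          match n with O => proj1_sig (next 0) | S n => proj1_sig (next (S (h n))) end).
  assert (Hspec : forall n, exists k, k <= h n /\ forall j, k <= j -> ~ lt (f j) (f (h n))).
  { intros [|n]; [exists 0 | exists (S (h n))]; exact (proj2_sig (next _)). }
  assert (Hstep : forall n, h n < h (S n)).
  { intro n. destruct (proj2_sig (next (S (h n)))) as [H _]. exact H. }
  assert (Hmono : forall i j, i < j -> h i < h j).
  { intros i j Hij. induction Hij. apply Hstep. specialize (Hstep m). lia. }
  exists h; split; [exact Hmono|].
  intros i j Hij. destruct (Hspec i) as [k [Hk Hmin]]. apply Hmin.
  specialize (Hmono _ _ Hij). lia.
Qed.

Definition pattern {T} (lt : T -> T -> Prop) (a b : nat -> T) :=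
  forall m n, lt (a m) (b n) <-> n <= m.

Lemma pattern_embeds {T} (lt : T -> T -> Prop) (a b : nat -> T) :
  strict_order lt -> pattern lt a b ->
  (forall i j, i < j -> ~ lt (a j) (a i)) ->
  (forall i j, i < j -> ~ lt (b j) (b i)) ->
  embeds Somega2_lt lt.
Proof.
  intros [Hirr Htr] Hp Ha Hb.
  assert (Naa : forall i j, ~ lt (a i) (a j)).
  { intros i j H. destruct (lt_eq_lt_dec i j) as [[Hij|Hij]|Hij].
    - assert (H0 : lt (a i) (b j)) by (apply Htr with (a j); [exact H| apply Hp; lia]).
      apply Hp in H0; lia.
    - subst; exact (Hirr _ H).
    - exact (Ha j i Hij H). }
  assert (Nbb : forall i j, ~ lt (b i) (b j)).
  { intros i j H. destruct (lt_eq_lt_dec i j) as [[Hij|Hij]|Hij].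
    - assert (H0 : lt (a i) (b j)) by (apply Htr with (b i); [apply Hp; lia| exact H]).
      apply Hp in H0; lia.
    - subst; exact (Hirr _ H).
    - exact (Hb j i Hij H). }
  assert (Nba : forall i j, ~ lt (b i) (a j)).
  { intros i j H. apply (Nbb i j). apply Htr with (a j); [exact H | apply Hp; lia]. }
  exists (fun x => match x with inl m => a m | inr n => b n end). split.
  - intros [m|n] [m'|n'] H; simpl in H.
    + f_equal. assert (H1 : lt (a m) (b m)) by (apply Hp; lia).
      assert (H2 : lt (a m') (b m')) by (apply Hp; lia).
      rewrite H in H1. rewrite <- H in H2. apply Hp in H1. apply Hp in H2. lia.
    + exfalso. assert (H1 : lt (a n') (b n')) by (apply Hp; lia).
      rewrite <- H in H1. exact (Naa _ _ H1).
    + exfalso. assert (H1 : lt (a n) (b n)) by (apply Hp; lia).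
      rewrite H in H1. exact (Naa _ _ H1).
    + f_equal. assert (H1 : lt (a n) (b n)) by (apply Hp; lia).
      assert (H2 : lt (a n') (b n')) by (apply Hp; lia).
      rewrite H in H1. rewrite <- H in H2. apply Hp in H1. apply Hp in H2. lia.
  - intros [m|n] [m'|n']; simpl.
    + split; [intros [] | apply Naa].
    + symmetry; apply Hp.
    + split; [intros [] | apply Nba].
    + split; [intros [] | apply Nbb].
Qed.

Lemma mono_le (g : nat -> nat) :
  (forall i j, i < j -> g i < g j) -> forall n m, n <= m <-> g n <= g m.
Proof.
  intros Hg n m; split; intro H.
  - destruct (Nat.eq_dec n m) as [->|Hne]; [lia|]. specialize (Hg n m ltac:(lia)); lia.
  - destruct (le_lt_dec n m) as [|Hlt]; [assumption|]. specialize (Hg _ _ Hlt); lia.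
Qed.

Lemma wf_pattern_embeds {T} (lt : T -> T -> Prop) a b :
  strict_order lt -> well_founded lt -> pattern lt a b -> embeds Somega2_lt lt.
Proof.
  intros Hs W Hp.
  destruct (refine lt b W) as [g1 [Hg1 Hb1]].
  destruct (refine lt (fun n => a (g1 n)) W) as [g2 [Hg2 Ha2]].
  apply (pattern_embeds lt (fun n => a (g1 (g2 n))) (fun n => b (g1 (g2 n))) Hs).
  - intros m n. eapply iff_trans; [apply Hp|].
    eapply iff_trans; [apply iff_sym, (mono_le g1 Hg1)|].
    apply iff_sym, (mono_le g2 Hg2).
  - intros i j Hij. exact (Ha2 i j Hij).
  - intros i j Hij. apply Hb1. apply Hg2; exact Hij.
Qed.

Lemma notwfD_emb {T} (lt : T -> T -> Prop) :
  strict_order lt -> well_founded lt -> ~ well_founded (DS_lt lt) -> embeds Somega2_lt lt.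
Proof.
  intros Hs W HD. pose proof Hs as [Hirr Htr].
  destruct (not_wf_chain _ HD) as [f Hf].
  pose (z := fun n => proj1_sig (constructive_indefinite_description _ (proj2_sig (f n)))).
  assert (Hz : forall n, proj1_sig (f n) = dset lt (z n))
    by (intro n; exact (proj2_sig (constructive_indefinite_description _ (proj2_sig (f n))))).
  assert (Hc : forall n, psubset (dset lt (z (S n))) (dset lt (z n))).
  { intro n. specialize (Hf n). unfold DS_lt in Hf. rewrite !Hz in Hf. exact Hf. }
  assert (Hw : forall n, exists w, lt w (z n) /\ ~ lt w (z (S n))).
  { intro n. destruct (Hc n) as [_ Hn]. unfold subset in Hn.
    apply not_all_ex_not in Hn as [w Hw]. exists w. unfold dset in Hw.
    apply imply_to_and in Hw. exact Hw. }
  pose (w := fun n => proj1_sig (constructive_indefinite_description _ (Hw n))).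
  assert (Hw' : forall n, lt (w n) (z n) /\ ~ lt (w n) (z (S n)))
    by (intro n; exact (proj2_sig (constructive_indefinite_description _ (Hw n)))).
  assert (Hmono : forall n m, n <= m -> forall u, lt u (z m) -> lt u (z n)).
  { intros n m H; induction H; intros u Hu; [exact Hu|]. apply IHle.
    apply (proj1 (Hc m)). exact Hu. }
  apply (wf_pattern_embeds lt w z Hs W).
  intros m n; split; intro H.
  - destruct (le_lt_dec n m) as [|Hlt]; [assumption|exfalso].
    apply (proj2 (Hw' m)). apply (Hmono (S m) n Hlt). exact H.
  - apply (Hmono n m H). apply Hw'.
Qed.

Lemma notwfCU_emb {T} (lt : T -> T -> Prop) :
  strict_order lt -> well_founded lt -> ~ well_founded (CUS_lt lt) -> embeds Somega2_lt lt.
Proof.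
  intros Hs W HD. pose proof Hs as [Hirr Htr].
  destruct (not_wf_chain _ HD) as [f Hf].
  pose (y := fun n => proj1_sig (constructive_indefinite_description _ (proj2_sig (f n)))).
  assert (Hy : forall n, proj1_sig (f n) = cuset lt (y n))
    by (intro n; exact (proj2_sig (constructive_indefinite_description _ (proj2_sig (f n))))).
  assert (Hc : forall n, psubset (cuset lt (y (S n))) (cuset lt (y n))).
  { intro n. specialize (Hf n). unfold CUS_lt in Hf. rewrite !Hy in Hf. exact Hf. }
  assert (Ht : forall n, exists t, ~ lt (y n) t /\ lt (y (S n)) t).
  { intro n. destruct (Hc n) as [_ Hn]. unfold subset in Hn.
    apply not_all_ex_not in Hn as [t Ht]. exists t. unfold cuset in Ht.
    apply imply_to_and in Ht. destruct Ht as [H1 H2]. split; [exact H1|].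
    apply NNPP; exact H2. }
  pose (t := fun n => proj1_sig (constructive_indefinite_description _ (Ht n))).
  assert (Ht' : forall n, ~ lt (y n) (t n) /\ lt (y (S n)) (t n))
    by (intro n; exact (proj2_sig (constructive_indefinite_description _ (Ht n)))).
  assert (Hstep : forall n v, lt (y n) v -> lt (y (S n)) v).
  { intros n v H. apply NNPP; intro Hn. exact (proj1 (Hc n) v Hn H). }
  assert (Hmono : forall n m, n <= m -> forall v, lt (y n) v -> lt (y m) v).
  { intros n m H; induction H; intros v Hv; [exact Hv|]. apply Hstep. apply IHle; exact Hv. }
  apply (wf_pattern_embeds lt (fun m => y (S m)) t Hs W).
  intros m n; split; intro H.
  - destruct (le_lt_dec n m) as [|Hlt]; [assumption|exfalso].
    apply (proj1 (Ht' n)). apply (Hmono (S m) n Hlt). exact H.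
  - apply (Hmono (S n) (S m) ltac:(lia)). apply Ht'.
Qed.

Lemma R22_embeds {T} (lt : T -> T -> Prop) (p q r s : T) :
  strict_order lt -> lt p q -> lt r s ->
  ~ lt p s -> ~ lt r q -> ~ lt p r -> ~ lt r p -> ~ lt q s -> ~ lt s q ->
  ~ lt q r -> ~ lt s p ->
  embeds R22_lt lt.
Proof.
  intros [Hirr Htr] Hpq Hrs Hps Hrq Hpr Hrp Hqs Hsq Hqr Hsp.
  assert (Hqp : ~ lt q p) by (intro H; exact (Hirr _ (Htr _ _ _ Hpq H))).
  assert (Hsr : ~ lt s r) by (intro H; exact (Hirr _ (Htr _ _ _ Hrs H))).
  exists (fun x => match x with x0 => p | y0 => q | x1 => r | y1 => s end).
  split.
  - intros [] [] H; simpl in H; try reflexivity; subst;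
      exfalso; first [ eapply Hirr; eassumption | contradiction ].
  - intros [] []; unfold R22_lt; simpl; split; intro H;
      first [ assumption | contradiction | exfalso; eapply Hirr; eassumption
            | left; split; reflexivity | right; split; reflexivity
            | destruct H as [[H1 H2]|[H1 H2]]; discriminate ].
Qed.

Lemma emb_notwfD {T} (lt : T -> T -> Prop) :
  strict_order lt -> ~ embeds R22_lt lt -> embeds Somega2_lt lt -> ~ well_founded (DS_lt lt).
Proof.
  intros Hs HR [pi [Hinj Hiff]]. pose proof Hs as [Hirr Htr].
  assert (Hab : forall m n, lt (pi (inl m)) (pi (inr n)) <-> n <= m).
  { intros m n. rewrite <- (Hiff (inl m) (inr n)). simpl. reflexivity. }
  assert (Hbb : forall i j, ~ lt (pi (inr i)) (pi (inr j))).
  { intros i j H. apply (proj2 (Hiff (inr i) (inr j))) in H. exact H. }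
  assert (Hba : forall i j, ~ lt (pi (inr i)) (pi (inl j))).
  { intros i j H. apply (proj2 (Hiff (inr i) (inl j))) in H. exact H. }
  assert (key : forall n u, lt u (pi (inr (S n))) -> lt u (pi (inr n))).
  { intros n u Hu. apply NNPP; intro Hn. apply HR.
    apply (R22_embeds lt (pi (inl n)) (pi (inr n)) u (pi (inr (S n))) Hs).
    - apply Hab; lia.
    - exact Hu.
    - intro H; apply Hab in H; lia.
    - exact Hn.
    - intro H. pose proof (proj1 (Hab n (S n)) (Htr _ _ _ H Hu)); lia.
    - intro H. exact (Hn (Htr _ _ _ H (proj2 (Hab n n) (le_n n)))).
    - apply Hbb.
    - apply Hbb.
    - intro H. exact (Hbb _ _ (Htr _ _ _ H Hu)).
    - apply Hba. }
  pose (f := (fun n : nat => exist (fun A : T -> Prop => exists x, A = dset lt x)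
                (dset lt (pi (inr n)))
                (ex_intro (fun x => dset lt (pi (inr n)) = dset lt x) (pi (inr n)) eq_refl))
             : nat -> DS lt).
  apply (chain_not_wf _ f). intro n. unfold DS_lt; simpl. split.
  - intros u Hu. apply key; exact Hu.
  - intro Hsub. unfold subset, dset in Hsub.
    specialize (Hsub (pi (inl n)) (proj2 (Hab n n) (le_n n))).
    apply Hab in Hsub; lia.
Qed.

Lemma emb_notwfCU {T} (lt : T -> T -> Prop) :
  strict_order lt -> ~ embeds R22_lt lt -> embeds Somega2_lt lt -> ~ well_founded (CUS_lt lt).
Proof.
  intros Hs HR [pi [Hinj Hiff]]. pose proof Hs as [Hirr Htr].
  assert (Hab : forall m n, lt (pi (inl m)) (pi (inr n)) <-> n <= m).
  { intros m n. rewrite <- (Hiff (inl m) (inr n)). simpl. reflexivity. }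
  assert (Haa : forall i j, ~ lt (pi (inl i)) (pi (inl j))).
  { intros i j H. apply (proj2 (Hiff (inl i) (inl j))) in H. exact H. }
  assert (Hba : forall i j, ~ lt (pi (inr i)) (pi (inl j))).
  { intros i j H. apply (proj2 (Hiff (inr i) (inl j))) in H. exact H. }
  assert (key : forall m v, lt (pi (inl m)) v -> lt (pi (inl (S m))) v).
  { intros m v Hv. apply NNPP; intro Hn. apply HR.
    apply (R22_embeds lt (pi (inl m)) v (pi (inl (S m))) (pi (inr (S m))) Hs).
    - exact Hv.
    - apply Hab; lia.
    - intro H; apply Hab in H; lia.
    - exact Hn.
    - apply Haa.
    - apply Haa.
    - intro H. pose proof (proj1 (Hab m (S m)) (Htr _ _ _ Hv H)); lia.
    - intro H. exact (Hn (Htr _ _ _ (proj2 (Hab (S m) (S m)) (le_n _)) H)).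
    - intro H. exact (Haa _ _ (Htr _ _ _ Hv H)).
    - apply Hba. }
  pose (f := (fun n : nat => exist (fun A : T -> Prop => exists x, A = cuset lt x)
                (cuset lt (pi (inl n)))
                (ex_intro (fun x => cuset lt (pi (inl n)) = cuset lt x) (pi (inl n)) eq_refl))
             : nat -> CUS lt).
  apply (chain_not_wf _ f). intro n. unfold CUS_lt; simpl. split.
  - intros v Hv H. apply Hv. apply key; exact H.
  - intro Hsub. unfold subset, cuset in Hsub.
    apply (Hsub (pi (inr (S n)))).
    + intro H; apply Hab in H; lia.
    + apply Hab; lia.
Qed.

Theorem lemma2p6 (S : Type) (lt : S -> S -> Prop) :
  strict_order lt ->
  well_founded lt ->
  ~ embeds R22_lt lt ->
  ((~ embeds Somega2_lt lt) <-> well_founded (DS_lt lt)) /\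
  (well_founded (DS_lt lt) <-> well_founded (CUS_lt lt)).
Proof.
  intros Hs W HR. split; split; intro H.
  - apply NNPP; intro Hn. exact (H (notwfD_emb lt Hs W Hn)).
  - intro He. exact (emb_notwfD lt Hs HR He H).
  - apply NNPP; intro Hn. exact (emb_notwfD lt Hs HR (notwfCU_emb lt Hs W Hn) H).
  - apply NNPP; intro Hn. exact (emb_notwfCU lt Hs HR (notwfD_emb lt Hs W Hn) H).
Qed.
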